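(* Let $U$ be a disjunctive uninorm with neutral element $e\in\,]0,1[$, let $x\in[0,1]$ with $x<e$ be such that $U(x,\cdot)$ is continuous with range $[0,1]$, and let $f(s)=U(x,s)$ for $s\in[0,1]$. Let $a_x=\lim_{n\to+\infty}x_U^{(n)}$ and $d_x=\lim_{n\to+\infty}x_U^{(-n)}$. Then: (i) $f(s)\neq s$ for all $s\in\,]a_x,d_x[$; (ii) if $f(s)=s$ for some $s\in[0,1]$, then $U(s,t)\notin\,]a_x,d_x[$ for all $t\in[0,1]$; (iii) $f(a_x)=a_x$ and $f(d_x)=d_x$; (iv) $U(a_x,d_x)\in\{a_x,d_x\}$.
   Context: A uninorm is a map $U:[0,1]^2\to[0,1]$ that is commutative, associative, non-decreasing in each variable, and has a neutral element $e\in[0,1]$; it is disjunctive if $U(1,0)=1$. Under the hypotheses there is a unique $y\in[0,1]$ with $U(x,y)=e$ (and $y>e$). Define $x_U^{(0)}=e$, $x_U^{(n)}=U(x,x_U^{(n-1)})$ for $n\in\mathbb{N}$, and $x_U^{(-n)}=y_U^{(n)}$ where $y_U^{(0)}=e$, $y_U^{(n)}=U(y,y_U^{(n-1)})$; the sequence $(x_U^{(n)})_{n\ge0}$ is non-increasing and $(x_U^{(-n)})_{n\ge0}$ is non-decreasing, so the limits exist. *)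

(* Defs.v *)
From Stdlib Require Import Reals.
Open Scope R_scope.

Definition I01 (x : R) : Prop := 0 <= x <= 1.

(* U : [0,1]^2 -> [0,1], represented as a total function R -> R -> R whose
   behaviour is only constrained on [0,1]^2. *)
Definition is_uninorm (U : R -> R -> R) (e : R) : Prop :=
  I01 e /\
  (forall x y, I01 x -> I01 y -> I01 (U x y)) /\
  (forall x y, I01 x -> I01 y -> U x y = U y x) /\
  (forall x y z, I01 x -> I01 y -> I01 z -> U x (U y z) = U (U x y) z) /\
  (forall x1 x2 y, I01 x1 -> I01 x2 -> I01 y -> x1 <= x2 -> U x1 y <= U x2 y) /\
  (forall x, I01 x -> U e x = x).

Definition disjunctive (U : R -> R -> R) : Prop := U 1 0 = 1.

Definition section_continuous (U : R -> R -> R) (x : R) : Prop :=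
  forall s, I01 s -> forall eps, 0 < eps ->
    exists delta, 0 < delta /\
      forall t, I01 t -> Rabs (t - s) < delta -> Rabs (U x t - U x s) < eps.

Definition section_range01 (U : R -> R -> R) (x : R) : Prop :=
  (forall s, I01 s -> I01 (U x s)) /\
  (forall z, I01 z -> exists s, I01 s /\ U x s = z).

Fixpoint upow (U : R -> R -> R) (e z : R) (n : nat) : R :=
  match n with
  | O => e
  | S m => U z (upow U e z m)
  end.

(* Main.v *)
Require Import Defs.
From Stdlib Require Import Reals Lra Lia.
Open Scope R_scope.

Lemma upow_I01 U e z : is_uninorm U e -> I01 z -> forall n, I01 (upow U e z n).
Proof.
  intros [He [Hcl _]] Hz n; induction n; simpl; [exact He | apply Hcl; auto].
Qed.

Lemma lim_le u l c : Un_cv u l -> (forall n, u n <= c) -> l <= c.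
Proof.
  intros H Hu. destruct (Rle_dec l c) as [|Hn]; auto. exfalso.
  destruct (H (l - c)) as [N HN]; [lra|]. specialize (HN N (le_n N)).
  unfold R_dist in HN. specialize (Hu N). apply Rabs_def2 in HN. lra.
Qed.

Lemma lim_ge u l c : Un_cv u l -> (forall n, c <= u n) -> c <= l.
Proof.
  intros H Hu. destruct (Rle_dec c l) as [|Hn]; auto. exfalso.
  destruct (H (c - l)) as [N HN]; [lra|]. specialize (HN N (le_n N)).
  unfold R_dist in HN. specialize (Hu N). apply Rabs_def2 in HN. lra.
Qed.

Lemma lim_I01 u l : Un_cv u l -> (forall n, I01 (u n)) -> I01 l.
Proof.
  intros H Hu. split.
  - apply (lim_ge u); auto. intro n; apply Hu.
  - apply (lim_le u); auto. intro n; apply Hu.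
Qed.

Lemma shift u l : Un_cv u l -> Un_cv (fun n => u (S n)) l.
Proof.
  intros H eps He; destruct (H eps He) as [N HN]; exists N; intros n Hn; apply HN; lia.
Qed.

Lemma cont_seq U x u l : section_continuous U x -> (forall n, I01 (u n)) -> I01 l ->
  Un_cv u l -> Un_cv (fun n => U x (u n)) (U x l).
Proof.
  intros Hc Hu Hl Hcv eps Heps. destruct (Hc l Hl eps Heps) as [del [Hd Hdel]].
  destruct (Hcv del Hd) as [N HN]. exists N. intros n Hn. unfold R_dist.
  apply Hdel; [apply Hu|]. apply HN; auto.
Qed.

Lemma lim_uniq u l1 l2 : Un_cv u l1 -> Un_cv u l2 -> l1 = l2.
Proof. apply UL_sequence. Qed.

Theorem mainTheorem10 (U : R -> R -> R) (e x y a d : R) :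
  is_uninorm U e -> disjunctive U -> 0 < e < 1 ->
  I01 x -> x < e ->
  section_continuous U x -> section_range01 U x ->
  (* y is the (unique) element of [0,1] with U(x,y) = e; x_U^(-n) = y_U^(n) *)
  I01 y -> U x y = e ->
  Un_cv (upow U e x) a -> Un_cv (upow U e y) d ->
  (forall s, a < s < d -> U x s <> s) /\
  (forall s, I01 s -> U x s = s ->
     forall t, I01 t -> ~ (a < U s t < d)) /\
  (U x a = a /\ U x d = d) /\
  (U a d = a \/ U a d = d).
Proof.
  intros Hun _ He01 Ix Hxe Hc _ Iy Hxy Hcx Hcy.
  pose proof Hun as [He [Hcl [Hcomm [Hassoc [Hmono Hid]]]]].
  assert (mono2 : forall z s1 s2, I01 z -> I01 s1 -> I01 s2 -> s1 <= s2 -> U z s1 <= U z s2).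
  { intros z s1 s2 Hz H1 H2 H12. rewrite (Hcomm z s1), (Hcomm z s2) by auto. apply Hmono; auto. }
  pose proof (upow_I01 U e x Hun Ix) as Ixn.
  pose proof (upow_I01 U e y Hun Iy) as Iyn.
  assert (Hye : e <= y).
  { destruct (Rle_dec e y) as [|Hn]; auto. exfalso.
    assert (U x y <= U x e) by (apply mono2; auto; lra).
    rewrite (Hcomm x e), Hid in H by auto. lra. }
  assert (Hxn : forall n, upow U e x n <= e).
  { induction n; simpl; [lra|].
    assert (U x (upow U e x n) <= U e (upow U e x n)) by (apply Hmono; auto; lra).
    rewrite Hid in H by auto. lra. }
  assert (Hyn : forall n, e <= upow U e y n).
  { induction n; simpl; [lra|].
    assert (U e (upow U e y n) <= U y (upow U e y n)) by (apply Hmono; auto).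
    rewrite Hid in H by auto. lra. }
  assert (Ia : I01 a) by (apply (lim_I01 _ _ Hcx Ixn)).
  assert (Id : I01 d) by (apply (lim_I01 _ _ Hcy Iyn)).
  assert (Hae : a <= e) by (apply (lim_le _ _ _ Hcx Hxn)).
  assert (Hed : e <= d) by (apply (lim_ge _ _ _ Hcy Hyn)).
  assert (Hxy_n : forall n, U (upow U e x n) (upow U e y n) = e).
  { induction n; simpl; [apply Hid; auto|].
    set (xn := upow U e x n) in *. set (yn := upow U e y n) in *.
    assert (Ixn' : I01 xn) by apply Ixn. assert (Iyn' : I01 yn) by apply Iyn.
    rewrite <- Hassoc by auto.
    rewrite (Hassoc xn y yn) by auto.
    rewrite (Hcomm xn y) by auto.
    rewrite <- (Hassoc y xn yn) by auto.
    rewrite IHn. rewrite (Hassoc x y e) by auto. rewrite Hxy. apply Hid; auto. }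
  assert (Hfixpow : forall z s, I01 z -> I01 s -> U z s = s -> forall n, U (upow U e z n) s = s).
  { intros z s Iz Is Hzs n. induction n; simpl; [apply Hid; auto|].
    pose proof (upow_I01 U e z Hun Iz n).
    rewrite <- Hassoc by auto. rewrite IHn. auto. }
  assert (Hmain : forall s, a < s < d -> U x s = s -> False).
  { intros s Hs Hfs.
    assert (Is : I01 s) by (destruct Ia, Id; split; lra).
    assert (Hys : U y s = s).
    { rewrite <- Hfs at 1. rewrite Hassoc by auto. rewrite (Hcomm y x), Hxy by auto.
      apply Hid; auto. }
    destruct (Hcx (s - a)) as [N1 HN1]; [lra|].
    destruct (Hcy (d - s)) as [N2 HN2]; [lra|].
    set (m := max N1 N2).
    specialize (HN1 m ltac:(unfold m; lia)). specialize (HN2 m ltac:(unfold m; lia)).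
    unfold R_dist in HN1, HN2. apply Rabs_def2 in HN1. apply Rabs_def2 in HN2.
    pose proof (Hfixpow x s Ix Is Hfs m) as E1.
    pose proof (Hfixpow y s Iy Is Hys m) as E2.
    assert (U (upow U e x m) s <= U (upow U e x m) (upow U e y m)) by (apply mono2; auto; lra).
    assert (U (upow U e y m) (upow U e x m) <= U (upow U e y m) s) by (apply mono2; auto; lra).
    rewrite (Hcomm (upow U e y m)) in H0 by auto.
    rewrite Hxy_n in H, H0. assert (s = e) by lra. subst s.
    rewrite (Hcomm x e), Hid in Hfs by auto. lra. }
  split; [intros s Hs Hf; exact (Hmain s Hs Hf)|].
  split.
  { intros s Is Hfs t It Hr. apply (Hmain (U s t) Hr).
    rewrite Hassoc by auto. rewrite Hfs. reflexivity. }
  assert (Hfa : U x a = a).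
  { apply (lim_uniq (fun n => U x (upow U e x n))).
    - apply cont_seq; auto.
    - apply (shift (upow U e x) a Hcx). }
  assert (Hfd : U x d = d).
  { apply (lim_uniq (fun n => U x (upow U e y (S n)))).
    - apply cont_seq; auto. apply shift; auto.
    - intros eps Heps. destruct (Hcy eps Heps) as [N HN]. exists N. intros n Hn.
      simpl. rewrite Hassoc by auto. rewrite Hxy, Hid by auto. apply HN; auto. }
  split; [split; auto|].
  assert (Ir : I01 (U a d)) by auto.
  assert (Hfr : U x (U a d) = U a d) by (rewrite Hassoc by auto; rewrite Hfa; auto).
  assert (H1 : U a e <= U a d) by (apply mono2; auto).
  assert (H2 : U e d <= U a d -> True) by auto.
  assert (H3 : U a d <= U e d) by (apply Hmono; auto).
  rewrite (Hcomm a e), Hid in H1 by auto. rewrite Hid in H3 by auto.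
  destruct (Rle_dec (U a d) a) as [|Hn1]; [left; lra|].
  destruct (Rle_dec d (U a d)) as [|Hn2]; [right; lra|].
  exfalso. apply (Hmain (U a d)); auto; lra.
Qed.
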